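(* Fix an instance of the data in the context and a cycle basis of the network graph $(\mathcal B,\mathcal L)$. For each cycle $C$ of the basis, with buses labeled $1,\dots,n$ in cyclic order ($n=|C|$) and oriented edges $(1,2),\dots,(n-1,n),(n,1)$, impose: (i) if $n=3$: $s_{12}c_{33}+c_{23}s_{31}+s_{23}c_{31}=0$ and $c_{12}c_{33}-c_{23}c_{31}+s_{23}s_{31}=0$; (ii) if $n\ge4$: introduce auxiliary real variables $\tilde c_{1,i},\tilde s_{1,i}$ for $i=3,\dots,n-1$, set $\tilde c_{12}=c_{12}$, $\tilde s_{12}=s_{12}$, $\tilde c_{1n}=c_{1n}$, $\tilde s_{1n}=s_{1n}$, and impose for $i=2,\dots,n-1$: $\tilde s_{1,i}c_{i+1,i+1}+s_{i,i+1}\tilde c_{1,i+1}-\tilde s_{1,i+1}c_{i,i+1}=0$ and $\tilde c_{1,i}c_{i+1,i+1}-c_{i,i+1}\tilde c_{1,i+1}-\tilde s_{1,i+1}s_{i,i+1}=0$; for $i=2,\dots,n-1$: $\tilde c_{1,i}^2+\tilde s_{1,i}^2=c_{11}c_{ii}$; and $c_{ij}^2+s_{ij}^2=c_{ii}c_{jj}$ for every edge $(i,j)$ of $C$. Then: (a) (validity) for every feasible point $(p^g,q^g,c,s,\theta)$ of the OPF formulation in the context, there exist values of the auxiliary variables such that all the constraints (i)–(ii) hold for every cycle of the basis; and (b) every $(p^g,q^g,c,s)$ satisfying (ALT), the coupling equalities $c_{ij}^2+s_{ij}^2=c_{ii}c_{jj}$ for all lines, and constraints (i)–(ii) (for some values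 of the auxiliary variables) satisfies, for each cycle $C$ in the basis, $\sum_{(i,j)\in C}\operatorname{atan2}(s_{ij},c_{ij})=2\pi k$ for some integer $k$ (sum over the oriented edges of $C$).
   Context: Data: finite bus set $\mathcal B$, line set $\mathcal L$ (unordered pairs of distinct buses; variables $c_{ij},s_{ij}$ for both orientations of each line), $\delta(i)$ the neighbors of $i$, generator set $\mathcal G\subseteq\mathcal B$, reals $G_{ij},B_{ij}$ (lines), $G_{ii},B_{ii}$ (buses), demands $p_i^d,q_i^d$, voltage bounds $0<\underline V_i\le\overline V_i$, generator bounds $p_i^{\min}\le p_i^{\max}$, $q_i^{\min}\le q_i^{\max}$ ($i\in\mathcal G$). Variables $p_i^g,q_i^g$ for $i\in\mathcal G$, with $p_i^g=q_i^g=0$ for $i\notin\mathcal G$. (ALT): $p_i^g-p_i^d=G_{ii}c_{ii}+\sum_{j\in\delta(i)}(G_{ij}c_{ij}-B_{ij}s_{ij})$, $q_i^g-q_i^d=-B_{ii}c_{ii}+\sum_{j\in\delta(i)}(-B_{ij}c_{ij}-G_{ij}s_{ij})$, $\underline V_i^2\le c_{ii}\le\overline V_i^2$ ($i\in\mathcal B$); $c_{ij}=c_{ji}$, $s_{ij}=-s_{ji}$ (lines); $p_i^{\min}\le p_i^g\le p_i^{\max}$, $q_i^{\min}\le q_i^g\le q_i^{\max}$ ($i\in\mathcal G$). OPF formulation: variables $(p^g,q^g,c,s,\theta)$ with $\theta\in\mathbb R^{\mathcal B}$ satisfying (ALT), $c_{ij}^2+s_{ij}^2=c_{ii}c_{jj}$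 and $\theta_j-\theta_i=\operatorname{atan2}(s_{ij},c_{ij})$ for every line $(i,j)$ (one fixed orientation per line suffices by symmetry). Here $\operatorname{atan2}(y,x)\in(-\pi,\pi]$ is the angle of the point $(x,y)\neq(0,0)$. A cycle basis is a basis of the cycle space of the graph consisting of cycles. *)

(* Defs.v *)
From HB Require Import structures.
From mathcomp Require Import all_boot all_order all_algebra.
From mathcomp Require Import all_classical all_reals all_analysis.
Set Implicit Arguments. Unset Strict Implicit. Unset Printing Implicit Defensive.
Import Order.TTheory GRing.Theory Num.Theory.
Local Open Scope ring_scope.

(* atan2 y x : the angle in (-pi, pi] of the point (x, y) <> (0, 0).
   (Value 0 at the origin is an arbitrary convention; never used there.) *)
Definition atan2 {R : realType} (y x : R) : R :=
  if 0 < x then atan (y / x)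
  else if x < 0 then (if 0 <= y then atan (y / x) + pi else atan (y / x) - pi)
  else if 0 < y then pi / 2
  else if y < 0 then - (pi / 2)
  else 0.

Section Graph.
Variable T : finType.

Definition is_cycle (adj : rel T) (p : seq T) : bool :=
  [&& uniq p, (3 <= size p)%N & cycle adj p].

Definition cycle_edges (p : seq T) : {set T * T} :=
  [set e | ((e.1 \in p) && (next p e.1 == e.2)) || ((e.2 \in p) && (next p e.2 == e.1))].

(* elements of the cycle space (over GF(2)): edge subsets (symmetric sets of
   ordered pairs of adjacent buses) in which every bus has even degree *)
Definition even_edge_set (adj : rel T) (E : {set T * T}) : Prop :=
  (forall e, e \in E -> adj e.1 e.2) /\
  (forall e, e \in E -> (e.2, e.1) \in E) /\
  (forall v : T, ~~ odd #|[set e in E | e.1 == v]|).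

(* GF(2)-sum (symmetric difference) of the edge sets of the cycles indexed by I *)
Definition cycles_sum (k : nat) (cyc : 'I_k -> seq T) (I : {set 'I_k}) : {set T * T} :=
  [set e | odd #|[set i in I | e \in cycle_edges (cyc i)]|].

Definition cycle_basis (adj : rel T) (k : nat) (cyc : 'I_k -> seq T) : Prop :=
  (forall i, is_cycle adj (cyc i)) /\
  (forall I : {set 'I_k}, I != finset.set0 -> cycles_sum cyc I != finset.set0) /\
  (forall E, even_edge_set adj E -> exists I : {set 'I_k}, cycles_sum cyc I = E).

End Graph.

Section Power.
Variables (R : realType) (T : finType).

Definition ALT (adj : rel T) (Gset : {set T})
  (Gl Bl : T -> T -> R) (Gb Bb pd qd Vmin Vmax pmin pmax qmin qmax : T -> R)
  (pg qg : T -> R) (c s : T -> T -> R) : Prop :=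
  (forall i, pg i - pd i = Gb i * c i i + \sum_(j | adj i j) (Gl i j * c i j - Bl i j * s i j)) /\
  (forall i, qg i - qd i = - Bb i * c i i + \sum_(j | adj i j) (- Bl i j * c i j - Gl i j * s i j)) /\
  (forall i, Vmin i ^+ 2 <= c i i <= Vmax i ^+ 2) /\
  (forall i j, adj i j -> c i j = c j i /\ s i j = - s j i) /\
  (forall i, i \in Gset -> pmin i <= pg i <= pmax i /\ qmin i <= qg i <= qmax i) /\
  (forall i, i \notin Gset -> pg i = 0 /\ qg i = 0).

(* feasibility for the OPF formulation; ori picks one orientation per line *)
Definition OPF_feasible (adj ori : rel T) (Gset : {set T})
  (Gl Bl : T -> T -> R) (Gb Bb pd qd Vmin Vmax pmin pmax qmin qmax : T -> R)
  (pg qg : T -> R) (c s : T -> T -> R) (th : T -> R) : Prop :=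
  ALT adj Gset Gl Bl Gb Bb pd qd Vmin Vmax pmin pmax qmin qmax pg qg c s /\
  (forall i j, adj i j -> c i j ^+ 2 + s i j ^+ 2 = c i i * c j j) /\
  (forall i j, ori i j -> th j - th i = atan2 (s i j) (c i j)).

(* labels 1..n of a cycle p (bus number k is the (k-1)-th entry of p) *)
Definition lab (p : seq T) (x0 : T) (k : nat) : T := nth x0 p k.-1.
Definition nxt (n k : nat) : nat := if k == n then 1%N else k.+1.

(* constraints (i)/(ii) for a cycle p (with existentially chosen auxiliary
   variables tc i = ~c_{1,i}, ts i = ~s_{1,i}) *)
Definition cycle_constr (p : seq T) (c s : T -> T -> R) : Prop :=
  match p with
  | [::] => True
  | x0 :: _ =>
    let n := size p in
    let C a b := c (lab p x0 a) (lab p x0 b) in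
    let S a b := s (lab p x0 a) (lab p x0 b) in
    if n == 3%N then
      S 1 2 * C 3 3 + C 2 3 * S 3 1 + S 2 3 * C 3 1 = 0 /\
      C 1 2 * C 3 3 - C 2 3 * C 3 1 + S 2 3 * S 3 1 = 0
    else
      exists tc ts : nat -> R,
        [/\ tc 2%N = C 1 2 /\ ts 2%N = S 1 2, tc n = C 1 n /\ ts n = S 1 n,
         (forall i, (2 <= i <= n.-1)%N ->
            ts i * C i.+1 i.+1 + S i i.+1 * tc i.+1 - ts i.+1 * C i i.+1 = 0 /\
            tc i * C i.+1 i.+1 - C i i.+1 * tc i.+1 - ts i.+1 * S i i.+1 = 0),
         (forall i, (2 <= i <= n.-1)%N -> tc i ^+ 2 + ts i ^+ 2 = C 1 1 * C i i) &
         (forall i, (1 <= i <= n)%N ->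
            C i (nxt n i) ^+ 2 + S i (nxt n i) ^+ 2 = C i i * C (nxt n i) (nxt n i))]
  end.

Definition cycle_angle_sum (p : seq T) (c s : T -> T -> R) : R :=
  match p with
  | [::] => 0
  | x0 :: _ =>
    \sum_(1 <= k < (size p).+1)
       atan2 (s (lab p x0 k) (lab p x0 (nxt (size p) k)))
             (c (lab p x0 k) (lab p x0 (nxt (size p) k)))
  end.

End Power.

(* Main.v *)
Require Import Defs.
From HB Require Import structures.
From mathcomp Require Import all_boot all_order all_algebra.
From mathcomp Require Import all_classical all_reals all_analysis.
From mathcomp Require Import ring lra zify.
Import Order.TTheory GRing.Theory Num.Theory.
Local Open Scope ring_scope.

Section S.
Variable R : realType.

Lemma cos_nat2pi (a : R) (n : nat) : cos (a + 2 * pi * n%:R) = cos a.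
Proof.
elim: n => [|n IH]; first by rewrite mulr0 addr0.
have -> : 2 * pi * n.+1%:R = 2 * pi * n%:R + pi *+ 2 :> R.
  by rewrite -addn1 natrD; ring.
by rewrite addrA cosD2pi IH.
Qed.

Lemma cos_int2pi (a : R) (z : int) : cos (a + 2 * pi * z%:~R) = cos a.
Proof.
case: z => n; first by rewrite cos_nat2pi.
rewrite NegzE mulrNz mulrN; change ((n.+1)%:~R : R) with ((n.+1)%:R : R).
by rewrite -(cos_nat2pi (a - 2 * pi * n.+1%:R) n.+1) subrK.
Qed.

Lemma cos_eq1 (x : R) : cos x = 1 -> exists z : int, x = 2 * pi * z%:~R.
Proof.
move=> cx.
have pi2 : 0 < 2 * (pi : R).
  have := @pi_gt0 R; lra.
set z := Num.floor (x / (2 * pi)).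
have /andP[zl zu] := Num.Theory.floor_itv (x / (2 * pi)); rewrite -/z in zl zu.
exists z.
set y := x - 2 * pi * z%:~R.
have cy : cos y = 1 by rewrite /y -mulrN -mulrNz cos_int2pi.
have y0 : 0 <= y.
  by rewrite /y subr_ge0 mulrC -ler_pdivlMr.
have y2 : y < 2 * pi.
  rewrite /y ltrBlDl -[X in _ + X]mulr1 -mulrDr mulrC -ltr_pdivrMr //.
  by move: zu; rewrite intrD.
have ypi : y \in `[0, pi] \/ (2 * pi - y) \in `[0, pi].
  case: (lerP y pi) => yp; [left | right]; rewrite in_itv /=.
    by rewrite y0 yp.
  apply/andP; split; first by rewrite subr_ge0 ltW.
  by rewrite lerBlDl; lra.
have in0 : (0 : R) \in `[0, pi] by rewrite in_itv /= lexx pi_ge0.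
case: ypi => H.
  have : y = 0 by apply: cos_inj => //; rewrite cos0.
  by move=> /eqP; rewrite subr_eq0 => /eqP.
have : 2 * pi - y = 0.
  apply: cos_inj => //; rewrite cos0.
  by rewrite -cosN opprB -(cos_int2pi (y - 2 * pi) 1) mulr1 subrK.
lra.
Qed.
End S.
Section S.
Variable R : realType.

Lemma sin_atan (t : R) : sin (atan t) = t / Num.sqrt (1 + t ^+ 2).
Proof.
have c0 : cos (atan t) != 0.
  rewrite cos_atan invr_eq0 sqrtr_eq0 -ltNge; apply: (lt_le_trans ltr01).
  by rewrite lerDl sqr_ge0.
have -> : sin (atan t) = tan (atan t) * cos (atan t) by rewrite /tan divfK.
by rewrite atanK cos_atan.
Qed.

Lemma cos_Bpi (a : R) : cos (a - pi) = - cos a.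
Proof. by rewrite -[in RHS](subrK pi a) cosDpi opprK. Qed.
Lemma sin_Bpi (a : R) : sin (a - pi) = - sin a.
Proof. by rewrite -[in RHS](subrK pi a) sinDpi opprK. Qed.

Lemma atan2_polar (x y : R) :
  Num.sqrt (x ^+ 2 + y ^+ 2) * cos (atan2 y x) = x /\
  Num.sqrt (x ^+ 2 + y ^+ 2) * sin (atan2 y x) = y.
Proof.
rewrite /atan2.
have key : x != 0 -> Num.sqrt (x ^+ 2 + y ^+ 2) = `|x| * Num.sqrt (1 + (y / x) ^+ 2)
   /\ 0 < Num.sqrt (1 + (y / x) ^+ 2).
  move=> x0; split.
    rewrite -sqrtr_sqr -sqrtrM ?sqr_ge0 //; congr Num.sqrt.
    by field.
  rewrite sqrtr_gt0; apply: (lt_le_trans ltr01); by rewrite lerDl sqr_ge0.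
case: (ltrP 0 x) => x0.
  have [-> g0] := key (lt0r_neq0 x0).
  rewrite cos_atan sin_atan gtr0_norm //.
  set g := Num.sqrt _ in g0 *.
  split; field; by rewrite ?(lt0r_neq0 x0) ?(lt0r_neq0 g0).
case: (ltrP x 0) => x1.
  have [-> g0] := key (ltr0_neq0 x1).
  rewrite ltr0_norm //.
  set g := Num.sqrt _ in g0 *.
  have hc : cos (atan (y / x)) = g^-1 by rewrite cos_atan.
  have hs : sin (atan (y / x)) = y / x / g by rewrite sin_atan.
  case: ifP => _; rewrite ?cosDpi ?sinDpi ?cos_Bpi ?sin_Bpi hc hs;
   split; field; by rewrite ?(ltr0_neq0 x1) ?(lt0r_neq0 g0).
have -> : x = 0 by apply/eqP; rewrite eq_le x0 x1.
rewrite expr0n /= add0r sqrtr_sqr.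
case: (ltrP 0 y) => y0.
  by rewrite cos_pihalf sin_pihalf gtr0_norm // mulr0 mulr1.
case: (ltrP y 0) => y1.
  by rewrite cosN sinN cos_pihalf sin_pihalf ltr0_norm // mulr0 mulrN mulr1 opprK.
have -> : y = 0 by apply/eqP; rewrite eq_le y0 y1.
by rewrite normr0 !mul0r.
Qed.
End S.
Section S.
Variable R : realType.

Lemma cos1_of (F r : R) : 0 < r -> 0 < r * cos F -> r * sin F = 0 -> cos F = 1.
Proof.
move=> r0 hc hs.
have s0 : sin F = 0 by move/eqP: hs; rewrite mulf_eq0 (gt_eqF r0) /= => /eqP.
have c0 : 0 < cos F by rewrite -(pmulr_rgt0 _ r0).
have := cos2Dsin2 F; rewrite s0 expr0n /= addr0 => h.
have : (cos F - 1) * (cos F + 1) = 0 by rewrite -subr_sqr h expr1n subrr.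
move/eqP; rewrite mulf_eq0 => /orP[/eqP|/eqP]; lra.
Qed.

Lemma polar_add (rho F r f : R) :
  (rho * r) * cos (F + f) = (rho * cos F) * (r * cos f) - (rho * sin F) * (r * sin f) /\
  (rho * r) * sin (F + f) = (rho * sin F) * (r * cos f) + (rho * cos F) * (r * sin f).
Proof. by rewrite cosD sinD; split; ring. Qed.

Lemma tri_alg (a b c2 d2 c3 d3 D : R) :
  b*D + c2*d3 + d2*c3 = 0 -> a*D - c2*c3 + d2*d3 = 0 ->
  ((a*c2 - b*d2)*c3 - (b*c2 + a*d2)*d3 = D*(a^+2+b^+2)) /\
  ((b*c2 + a*d2)*c3 + (a*c2 - b*d2)*d3 = 0).
Proof.
move=> h1 h2; split.
  have -> : (a*c2 - b*d2)*c3 - (b*c2 + a*d2)*d3 =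
    D*(a^+2+b^+2) - a*(a*D - c2*c3 + d2*d3) - b*(b*D + c2*d3 + d2*c3) by ring.
  by rewrite h1 h2 !mulr0 !subr0.
have -> : (b*c2 + a*d2)*c3 + (a*c2 - b*d2)*d3 =
   a*(b*D + c2*d3 + d2*c3) - b*(a*D - c2*c3 + d2*d3) by ring.
by rewrite h1 h2 !mulr0 subr0.
Qed.

Lemma rec_alg (tc ts tc' ts' C S Cii D : R) : 0 < D -> C^+2+S^+2 = Cii*D ->
  ts*D + S*tc' - ts'*C = 0 -> tc*D - C*tc' - ts'*S = 0 ->
  Cii*tc' = C*tc - S*ts /\ Cii*ts' = S*tc + C*ts.
Proof.
move=> D0 hc e1 e2.
have D0' : D != 0 by rewrite gt_eqF.
split; apply/eqP; rewrite -subr_eq0; apply/eqP.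
  have : D * (Cii*tc' - (C*tc - S*ts)) = 0.
    have -> : D * (Cii*tc' - (C*tc - S*ts)) =
      tc'*(Cii*D - (C^+2+S^+2)) - C*(tc*D - C*tc' - ts'*S) + S*(ts*D + S*tc' - ts'*C) by ring.
    by rewrite hc e1 e2; ring.
  by move/eqP; rewrite mulf_eq0 (negbTE D0') /= => /eqP.
have : D * (Cii*ts' - (S*tc + C*ts)) = 0.
  have -> : D * (Cii*ts' - (S*tc + C*ts)) =
    ts'*(Cii*D - (C^+2+S^+2)) - S*(tc*D - C*tc' - ts'*S) - C*(ts*D + S*tc' - ts'*C) by ring.
  by rewrite hc e1 e2; ring.
by move/eqP; rewrite mulf_eq0 (negbTE D0') /= => /eqP.
Qed.
End S.
Lemma lab_next (T : finType) (x0 : T) (p' : seq T) k :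
  uniq (x0 :: p') -> (1 <= k <= size (x0::p'))%N ->
  next (x0::p') (lab (x0::p') x0 k) = lab (x0::p') x0 (nxt (size (x0::p')) k).
Proof.
move=> up /andP[k1 kn].
have kin : (k.-1 < size (x0 :: p'))%N by case: k k1 kn.
rewrite next_nth /lab mem_nth // index_uniq // /nxt /=.
case: eqP => [->|ne] /=; first by rewrite nth_default.
by case: k k1 kn kin ne.
Qed.

Lemma lab_adj (T : finType) (adj : rel T) (x0 : T) (p' : seq T) k :
  uniq (x0 :: p') -> cycle adj (x0 :: p') -> (1 <= k <= size (x0::p'))%N ->
  adj (lab (x0::p') x0 k) (lab (x0::p') x0 (nxt (size (x0::p')) k)).
Proof.
move=> up cy hk; rewrite -lab_next //; apply: next_cycle => //.
rewrite /lab mem_nth //; move: hk => /andP[]; by case: k.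
Qed.
Lemma parta_cycle (R : realType) (T : finType) (adj : rel T) (c s : T -> T -> R) (p : seq T)
  (V co si : T -> R) :
  (forall i j, adj i j -> c i j = V i * V j * (co j * co i + si j * si i) /\
                          s i j = V i * V j * (si j * co i - co j * si i)) ->
  (forall i, c i i = V i ^+ 2 * (co i ^+ 2 + si i ^+ 2)) ->
  (forall i j, adj i j -> c i j ^+ 2 + s i j ^+ 2 = c i i * c j j) ->
  (forall i j, adj i j = adj j i) ->
  is_cycle adj p -> cycle_constr p c s.
Proof.
move=> pol diag coup asym /and3P[up n3 cy].
case: p up n3 cy => [//|x0 p'] up n3 cy.
rewrite /cycle_constr; cbv beta iota zeta.
have adjk := fun k => @lab_adj T adj x0 p' k up cy.
set L := lab (x0 :: p') x0 in adjk *.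
set n := size (x0 :: p') in n3 adjk *.
case: ifP => [/eqP n3e|/eqP n3n].
  have a12 := adjk 1 ltac:(lia); have a23 := adjk 2 ltac:(lia); have a31 := adjk 3 ltac:(lia).
  rewrite /nxt n3e /= in a12 a23 a31.
  have [P1 Q1] := pol _ _ a12; have [P2 Q2] := pol _ _ a23; have [P3 Q3] := pol _ _ a31.
  rewrite P1 Q1 P2 Q2 P3 Q3 (diag (L 3)); split; ring.
have enx : forall i, (i < n)%N -> nxt n i = i.+1.
  by move=> i hi; rewrite /nxt; case: eqP => [e|//]; lia.
have a12 := adjk 1 ltac:(lia); rewrite enx in a12; last lia.
have an1 := adjk n ltac:(lia); rewrite /nxt eqxx asym in an1.
exists (fun i => V (L 1) * V (L i) * (co (L i) * co (L 1) + si (L i) * si (L 1))).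
exists (fun i => V (L 1) * V (L i) * (si (L i) * co (L 1) - co (L i) * si (L 1))).
split.
- by case: (pol _ _ a12) => -> ->.
- by case: (pol _ _ an1) => -> ->.
- move=> i hi; have ai := adjk i ltac:(lia); rewrite enx in ai; last lia.
  have [P Q] := pol _ _ ai.
  rewrite P Q (diag (L i.+1)); split; ring.
- by move=> i hi; rewrite !diag; ring.
- by move=> i hi; apply: coup; apply: adjk.
Qed.
Lemma partb_cycle (R : realType) (T : finType) (adj : rel T) (c s : T -> T -> R) (p : seq T) :
  (forall i, 0 < c i i) ->
  (forall i j, adj i j -> c i j = c j i /\ s i j = - s j i) ->
  (forall i j, adj i j -> c i j ^+ 2 + s i j ^+ 2 = c i i * c j j) ->
  is_cycle adj p -> cycle_constr p c s ->
  exists z : int, cycle_angle_sum p c s = 2 * pi * z%:~R.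
Proof.
move=> cpos sym coup /and3P[up n3 cy].
case: p up n3 cy => [//|x0 p'] up n3 cy.
rewrite /cycle_constr /cycle_angle_sum; cbv beta iota zeta.
have adjk := fun k => @lab_adj T adj x0 p' k up cy.
set L := lab (x0 :: p') x0 in adjk *.
set n := size (x0 :: p') in n3 adjk *.
pose phi k := atan2 (s (L k) (L (nxt n k))) (c (L k) (L (nxt n k))).
pose r k := Num.sqrt (c (L k) (L (nxt n k)) ^+ 2 + s (L k) (L (nxt n k)) ^+ 2).
have hr : forall k, (1 <= k <= n)%N -> 0 < r k.
  move=> k hk; rewrite /r sqrtr_gt0 coup ?adjk //.
  by apply: mulr_gt0.
have hc : forall k, r k * cos (phi k) = c (L k) (L (nxt n k)) by move=> k; exact: (atan2_polar _ _ _).1.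
have hs : forall k, r k * sin (phi k) = s (L k) (L (nxt n k)) by move=> k; exact: (atan2_polar _ _ _).2.
move=> hcon.
suff : cos (\sum_(1 <= k < n.+1) phi k) = 1 by move/cos_eq1.
move: hcon; case: ifP => [/eqP n3e|/eqP n3n] hcon.
  have e1 : nxt n 1 = 2 by rewrite /nxt n3e.
  have e2 : nxt n 2 = 3 by rewrite /nxt n3e.
  have e3 : nxt n 3 = 1 by rewrite /nxt n3e.
  have hc1 := hc 1; have hs1 := hs 1; have hc2 := hc 2; have hs2 := hs 2.
  have hc3 := hc 3; have hs3 := hs 3.
  rewrite e1 in hc1 hs1; rewrite e2 in hc2 hs2; rewrite e3 in hc3 hs3.
  have a12 := adjk 1; rewrite e1 in a12.
  have in1 : (0 < 1 <= n)%N by rewrite n3e.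
  have in2 : (0 < 2 <= n)%N by rewrite n3e.
  have in3 : (0 < 3 <= n)%N by rewrite n3e.
  rewrite n3e big_ltn // big_ltn // big_ltn // big_geq // addr0 addrA.
  case: hcon => t1 t2.
  have [P1 Q1] := polar_add R (r 1) (phi 1) (r 2) (phi 2).
  have [P2 Q2] := polar_add R (r 1 * r 2) (phi 1 + phi 2) (r 3) (phi 3).
  rewrite hc1 hc2 hs1 hs2 in P1 Q1. rewrite P1 Q1 hc3 hs3 in P2 Q2.
  have [T1 T2] := @tri_alg R _ _ _ _ _ _ _ t1 t2.
  apply: (@cos1_of R _ (r 1 * r 2 * r 3)).
  - by apply: mulr_gt0; [apply: mulr_gt0; [exact: (hr 1 in1)|exact: (hr 2 in2)]|exact: (hr 3 in3)].
  - rewrite P2 T1; apply: mulr_gt0; first exact: cpos.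
    by rewrite coup; [exact: mulr_gt0|exact: a12].
  - by rewrite Q2 T2.
have n4 : (3 < n)%N by lia.
case: hcon => tc [ts [[t2c t2s] [tnc tns] rec _ _]].
have enx : forall i, (i < n)%N -> nxt n i = i.+1.
  by move=> i hi; rewrite /nxt; case: eqP => [e|//]; lia.
have claim : forall m, (0 < m)%N -> (m <= n.-1)%N -> exists rho, 0 < rho /\
   tc m.+1 = rho * cos (\sum_(1 <= k < m.+1) phi k) /\
   ts m.+1 = rho * sin (\sum_(1 <= k < m.+1) phi k).
  elim=> [//|m IH] _ hm.
  case: m IH hm => [|m] IH hm.
    exists (r 1); split; first by apply: hr; lia.
    rewrite big_nat1 hc hs enx; [by rewrite t2c t2s|lia].
  have [rho [rho0 [Hc Hs]]] := IH isT (leq_trans (leqnSn _) hm).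
  have [E1 E2] : _ /\ _ := rec m.+2 ltac:(lia).
  have hi : nxt n m.+2 = m.+3 by apply: enx; lia.
  have ad := adjk m.+2 ltac:(lia); rewrite hi in ad.
  have cp := coup _ _ ad.
  have [A1 A2] := @rec_alg R _ _ _ _ _ _ _ _ (cpos (L m.+3)) cp E1 E2.
  have [PA QA] := polar_add R rho (\sum_(1 <= k < m.+2) phi k) (r m.+2) (phi m.+2).
  rewrite -Hc -Hs hc hs hi in PA QA.
  have Cn : c (L m.+2) (L m.+2) != 0 := lt0r_neq0 (cpos _).
  have r0 : 0 < r m.+2 by apply: hr; lia.
  exists (rho * r m.+2 / c (L m.+2) (L m.+2)); split.
    by apply: divr_gt0; [exact: mulr_gt0|exact: cpos].
  rewrite big_nat_recr //=.
  split; apply: (mulfI Cn).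
    rewrite A1.
    have -> : forall X, c (L m.+2) (L m.+2) * (rho * r m.+2 / c (L m.+2) (L m.+2) * X) = rho * r m.+2 * X.
      by move=> X; field.
    by rewrite PA; ring.
  rewrite A2.
  have -> : forall X, c (L m.+2) (L m.+2) * (rho * r m.+2 / c (L m.+2) (L m.+2) * X) = rho * r m.+2 * X.
    by move=> X; field.
  by rewrite QA; ring.
have [rho [rho0 [Hc Hs]]] := claim n.-1 ltac:(lia) ltac:(lia).
have e : (n.-1).+1 = n by lia.
rewrite e in Hc Hs.
have n1 : (1 <= n)%N by lia.
rewrite big_nat_recr //=.
have hn : nxt n n = 1 by rewrite /nxt eqxx.
have ad := adjk n ltac:(lia); rewrite hn in ad.
have [E1 E2] := sym _ _ ad.
have E2' : s (L 1) (L n) = - s (L n) (L 1) by rewrite E2 opprK.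
have [PA QA] := polar_add R rho (\sum_(1 <= k < n) phi k) (r n) (phi n).
rewrite -Hc -Hs hc hs hn tnc tns -E1 E2' in PA QA.
apply: (@cos1_of R _ (rho * r n)).
- by apply: mulr_gt0 => //; apply: hr; lia.
- rewrite PA.
  have -> : c (L n) (L 1) * c (L n) (L 1) - - s (L n) (L 1) * s (L n) (L 1) =
     c (L n) (L 1) ^+ 2 + s (L n) (L 1) ^+ 2 by ring.
  by rewrite coup //; apply: mulr_gt0.
- by rewrite QA; ring.
Qed.
Theorem proposition7 (R : realType) (T : finType)
  (adj : rel T) (Gset : {set T})
  (Gl Bl : T -> T -> R) (Gb Bb pd qd Vmin Vmax pmin pmax qmin qmax : T -> R)
  (ori : rel T) (k : nat) (cyc : 'I_k -> seq T)
  (adj_sym : forall i j, adj i j = adj j i)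
  (adj_irr : forall i, ~~ adj i i)
  (Gl_sym : forall i j, adj i j -> Gl i j = Gl j i)
  (Bl_sym : forall i j, adj i j -> Bl i j = Bl j i)
  (Vmin_pos : forall i, 0 < Vmin i)
  (Vmin_le : forall i, Vmin i <= Vmax i)
  (pmin_le : forall i, i \in Gset -> pmin i <= pmax i)
  (qmin_le : forall i, i \in Gset -> qmin i <= qmax i)
  (ori_adj : forall i j, ori i j -> adj i j)
  (ori_one : forall i j, adj i j -> (ori i j (+) ori j i))
  (basis : cycle_basis adj cyc) :
  (* (a) validity *)
  (forall (pg qg : T -> R) (c s : T -> T -> R) (th : T -> R),
     OPF_feasible adj ori Gset Gl Bl Gb Bb pd qd Vmin Vmax pmin pmax qmin qmax pg qg c s th ->
     forall b : 'I_k, cycle_constr (cyc b) c s) /\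
  (* (b) angle sums around basis cycles are multiples of 2 pi *)
  (forall (pg qg : T -> R) (c s : T -> T -> R),
     ALT adj Gset Gl Bl Gb Bb pd qd Vmin Vmax pmin pmax qmin qmax pg qg c s ->
     (forall i j, adj i j -> c i j ^+ 2 + s i j ^+ 2 = c i i * c j j) ->
     (forall b : 'I_k, cycle_constr (cyc b) c s) ->
     forall b : 'I_k, exists z : int, cycle_angle_sum (cyc b) c s = 2 * pi * z%:~R).
Proof.
have cposG : forall (c : T -> T -> R), (forall i, Vmin i ^+ 2 <= c i i <= Vmax i ^+ 2) ->
    forall i, 0 < c i i.
  move=> c vb i; have /andP[h _] := vb i.
  by apply: lt_le_trans h; apply: exprn_gt0.
split.
  move=> pg qg c s th [[_ [_ [vb [sym _]]]] [coup oeq]] b.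
  have cpos := cposG c vb.
  pose V i := Num.sqrt (c i i).
  have key : forall i j, ori i j ->
      c i j = V i * V j * (cos (th j) * cos (th i) + sin (th j) * sin (th i)) /\
      s i j = V i * V j * (sin (th j) * cos (th i) - cos (th j) * sin (th i)).
    move=> i j o; have E := oeq i j o; have aij := ori_adj i j o.
    have [A B] := atan2_polar R (c i j) (s i j).
    rewrite coup // sqrtrM ?(ltW (cpos i)) // -E cosB sinB in A B.
    by rewrite -{1}A -{1}B.
  apply: (@parta_cycle R T adj c s (cyc b) V (fun i => cos (th i)) (fun i => sin (th i))).
  - move=> i j aij; case: (boolP (ori i j)) => o; first exact: key.
    have o' : ori j i by move: (ori_one i j aij); rewrite (negbTE o).
    have [P Q] := key j i o'; have [S1 S2] := sym i j aij.
    by rewrite S1 S2 P Q; split; ring.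
  - by move=> i; rewrite cos2Dsin2 mulr1 sqr_sqrtr // ltW.
  - exact: coup.
  - exact: adj_sym.
  - exact: basis.1.
move=> pg qg c s [_ [_ [vb [sym _]]]] coup hcon b.
exact: (partb_cycle _ _ _ _ _ _ (cposG c vb) sym coup (basis.1 b) (hcon b)).
Qed.
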